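(* Let $a_c\in(\pi,\frac32\pi)$ denote the smallest strictly positive solution of $\tanh(x)=\tan(x)$ and let $\alpha_{\mathrm{crit}}:=\frac{1}{a_c\sqrt2}$. Then for every $\alpha\ge\alpha_{\mathrm{crit}}$ the rate of change function satisfies $\mathit{rc}_\alpha'(x)>0$ for all $x\in(0,1)$.
   Context: For $\alpha>0$ let $\varepsilon_\alpha=\frac{1}{4\alpha^2}$. The constant $u\equiv\alpha$ solves the Helfrich Dirichlet problem $\frac{1}{u\sqrt{1+u'^2}}\frac{d}{dx}\bigl(\frac{u}{\sqrt{1+u'^2}}H'\bigr)+\frac12 H\bigl(\frac{u''}{(1+u'^2)^{3/2}}+\frac{1}{u\sqrt{1+u'^2}}\bigr)^2-2\varepsilon H=0$ in $(-1,1)$, $u(\pm1)=\alpha$, $u'(\pm1)=0$ (with $H=\frac12(\frac{1}{u\sqrt{1+u'^2}}-\frac{u''}{(1+u'^2)^{3/2}})$) for $\varepsilon=\varepsilon_\alpha$, and there is a smooth family $(u_\varepsilon)$ of solutions for $\varepsilon$ near $\varepsilon_\alpha$ with $u_{\varepsilon_\alpha}\equiv\alpha$. The rate of change function is $\mathit{rc}_\alpha:=\frac{\partial u_\varepsilon}{\partial\varepsilon}\big|_{\varepsilon=\varepsilon_\alpha}$; equivalently, $\mathit{rc}_\alpha$ is the unique solution of $\mathit{rc}_\alpha^{(iv)}+\frac{1}{\alpha^4}\mathit{rc}_\alpha=-\frac{2}{\alpha}$ in $(-1,1)$, $\mathit{rc}_\alpha(\pm1)=\mathit{rc}_\alpha'(\pm1)=0$.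 *)

(* Defs.v *)
From Stdlib Require Import Reals.
From Coquelicot Require Import Coquelicot.
Open Scope R_scope.

Definition tanh_ (x : R) : R := (exp x - exp (- x)) / (exp x + exp (- x)).

(* x solves tanh(x) = tan(x); tan is only defined where cos x <> 0. *)
Definition tanh_tan_sol (x : R) : Prop := cos x <> 0 /\ tanh_ x = tan x.

Definition is_ac (a : R) : Prop :=
  0 < a /\ tanh_tan_sol a /\ (forall x, 0 < x < a -> ~ tanh_tan_sol x).

Definition alpha_crit (a : R) : R := 1 / (a * sqrt 2).

Definition is_rc (alpha : R) (f : R -> R) : Prop :=
  (forall k x, (k <= 4)%nat -> ex_derive_n f k x) /\
  (forall x, -1 < x < 1 -> Derive_n f 4 x + f x / alpha ^ 4 = - 2 / alpha) /\
  f (-1) = 0 /\ f 1 = 0 /\ Derive f (-1) = 0 /\ Derive f 1 = 0.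

(* Main.v *)
Require Import Defs.
From Stdlib Require Import Reals Lra Psatz Lia.
From Coquelicot Require Import Coquelicot.
Open Scope R_scope.

Definition ch (t : R) := (exp t + exp (- t)) / 2.
Definition sh (t : R) := (exp t - exp (- t)) / 2.
Definition pp (t : R) := ch t * sin t - sh t * cos t.
Definition qq (t : R) := ch t * sin t + sh t * cos t.

Lemma dch t : is_derive ch t (sh t).
Proof. unfold ch, sh. auto_derive; auto. field. Qed.
Lemma dsh t : is_derive sh t (ch t).
Proof. unfold ch, sh. auto_derive; auto. field. Qed.
Lemma chsh t : ch t * ch t - sh t * sh t = 1.
Proof.
  unfold ch, sh. rewrite exp_Ropp. assert (exp t > 0) by apply exp_pos. field. lra.
Qed.
Lemma sh_pos t : 0 < t -> 0 < sh t.
Proof. intro. unfold sh. assert (exp (-t) < exp t) by (apply exp_increasing; lra). lra. Qed.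
Lemma ch_pos t : 0 < ch t.
Proof. unfold ch. pose proof (exp_pos t). pose proof (exp_pos (-t)). lra. Qed.
Lemma sh0 : sh 0 = 0.
Proof. unfold sh. rewrite Ropp_0. lra. Qed.

Lemma dp t : is_derive pp t (2 * sh t * sin t).
Proof. unfold pp, ch, sh. auto_derive; auto. field. Qed.
Lemma dq t : is_derive qq t (2 * ch t * cos t).
Proof. unfold qq, ch, sh. auto_derive; auto. field. Qed.

Lemma mvt_pos f df a b : a < b ->
  (forall x, a <= x <= b -> is_derive f x (df x)) ->
  (forall x, a < x < b -> 0 < df x) -> f a < f b.
Proof.
  intros Hab Hd Hp.
  destruct (MVT_cor2 f df a b Hab) as [c [Hc1 Hc2]].
  - intros c Hc. apply is_derive_Reals. apply Hd; auto.
  - specialize (Hp c Hc2). nra.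
Qed.

Lemma shch_gt t : 0 < t -> sin t * cos t < sh t * ch t /\ - (sh t * ch t) < sin t * cos t.
Proof.
  intro Ht. split.
  - assert (H := mvt_pos (fun t => sh t * ch t - sin t * cos t)
      (fun t => ch t * ch t + sh t * sh t - (cos t * cos t - sin t * sin t)) 0 t Ht).
    simpl in H. rewrite sh0, sin_0 in H. cut (0 < sh t * ch t - sin t * cos t). lra.
    replace 0 with (0 * ch 0 - 0 * cos 0) by ring. apply H.
    + intros x _. unfold ch, sh. auto_derive; auto. field.
    + intros x Hx. pose proof (chsh x). pose proof (sh_pos x (proj1 Hx)).
      pose proof (sin2_cos2 x). unfold Rsqr in *. nra.
  - assert (H := mvt_pos (fun t => sh t * ch t + sin t * cos t)
      (fun t => ch t * ch t + sh t * sh t + (cos t * cos t - sin t * sin t)) 0 t Ht).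
    simpl in H. rewrite sh0, sin_0 in H. cut (0 < sh t * ch t + sin t * cos t). lra.
    replace 0 with (0 * ch 0 + 0 * cos 0) by ring. apply H.
    + intros x _. unfold ch, sh. auto_derive; auto. field.
    + intros x Hx. pose proof (chsh x). pose proof (sh_pos x (proj1 Hx)).
      pose proof (sin2_cos2 x). unfold Rsqr in *. nra.
Qed.

Lemma p0 : pp 0 = 0.
Proof. unfold pp. rewrite sh0, sin_0. field. Qed.

Lemma p_pos_pi t : 0 < t <= PI -> 0 < pp t.
Proof.
  intros [H1 H2]. rewrite <- p0.
  apply (mvt_pos pp (fun t => 2 * sh t * sin t) 0 t H1).
  - intros; apply dp.
  - intros x Hx. pose proof (sh_pos x (proj1 Hx)). pose proof (sin_gt_0 x (proj1 Hx) ltac:(lra)). nra.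
Qed.

Lemma p_cont : continuity pp.
Proof.
  intro x. apply continuity_pt_filterlim. apply (ex_derive_continuous (K:=R_AbsRing) (V:=R_NormedModule)).
  eexists. apply dp.
Qed.

Lemma p_zero_sol x : 0 < x -> pp x = 0 -> tanh_tan_sol x.
Proof.
  intros Hx H. unfold pp, ch, sh in H.
  pose proof (exp_pos x). pose proof (exp_pos (-x)).
  assert (Hc : cos x <> 0).
  { intro Hc. rewrite Hc in H. pose proof (sin2_cos2 x). rewrite Hc in H2. unfold Rsqr in H2.
    assert (Hs : ((exp x + exp (-x))/2) * sin x = 0) by lra.
    apply Rmult_integral in Hs. destruct Hs as [Hs|Hs]. lra. rewrite Hs in H2. lra. }
  split; auto. unfold tanh_, tan. field_simplify_eq; [|split; auto; lra]. nra.
Qed.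

Lemma ac_facts ac : is_ac ac ->
  (forall t, 0 < t < ac -> 0 < pp t) /\ pp ac = 0 /\ PI < ac /\ sin ac < 0.
Proof.
  intros [Hpos [[Hc Ht] Hmin]].
  assert (Hp0 : pp ac = 0).
  { unfold tanh_, tan in Ht. unfold pp, ch, sh.
    pose proof (exp_pos ac). pose proof (exp_pos (-ac)).
    field_simplify_eq in Ht; try (split; auto; lra). lra. }
  assert (Hpt : forall t, 0 < t < ac -> 0 < pp t).
  { intros t Ht0. destruct (Rle_or_lt t PI) as [Hle|Hlt].
    - apply p_pos_pi; lra.
    - destruct (Rlt_or_le 0 (pp t)) as [Hok|Hbad]; auto.
      exfalso. pose proof (p_pos_pi PI ltac:(split; [apply PI_RGT_0|lra])) as HPI.
      destruct (IVT_gen pp PI t 0 p_cont) as [z [Hz1 Hz2]].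
      { rewrite Rmin_right by lra. rewrite Rmax_left by lra. lra. }
      rewrite Rmin_left in Hz1 by lra. rewrite Rmax_right in Hz1 by lra.
      pose proof PI_RGT_0.
      apply (Hmin z); [lra|]. apply p_zero_sol; lra. }
  assert (HgtPI : PI < ac).
  { destruct (Rle_or_lt ac PI); auto. pose proof (p_pos_pi ac ltac:(lra)). lra. }
  assert (Hle : ac <= 3 * (PI / 2)).
  { destruct (Rle_or_lt ac (3 * (PI/2))) as [h|h]; auto. exfalso.
    pose proof PI_RGT_0.
    pose proof (Hpt (3 * (PI/2)) ltac:(lra)). unfold pp in H0.
    rewrite sin_3PI2, cos_3PI2 in H0. pose proof (ch_pos (3 * (PI/2))). nra. }
  repeat split; auto. apply sin_lt_0; lra.
Qed.

Lemma key ac a u : is_ac ac -> 0 < u -> u < a -> a <= ac ->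
  0 < pp a * qq u - qq a * pp u.
Proof.
  intros Hac Hu Hua Hale.
  destruct (ac_facts ac Hac) as [Hpt [Hp0 [HPI Hsin]]].
  assert (Hpu : 0 < pp u) by (apply Hpt; lra).
  destruct (Rle_lt_or_eq_dec a ac Hale) as [Hlt|Heq].
  - assert (Hpa : 0 < pp a) by (apply Hpt; lra).
    assert (H := mvt_pos (fun t => - (qq t / pp t))
      (fun t => - ((2 * ch t * cos t * pp t - qq t * (2 * sh t * sin t)) / pp t ^ 2)) u a Hua).
    simpl in H.
    assert (Hr : qq a / pp a < qq u / pp u).
    { cut (- (qq u / pp u) < - (qq a / pp a)). lra. apply H.
      - intros x Hx. apply (is_derive_opp (fun t => qq t / pp t)).
        apply is_derive_div; [apply dq|apply dp|]. assert (0 < pp x) by (apply Hpt; lra). lra.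
      - intros x Hx. assert (0 < pp x) by (apply Hpt; lra).
        assert (E : 2 * ch x * cos x * pp x - qq x * (2 * sh x * sin x)
                    = 2 * (sin x * cos x - sh x * ch x) * (ch x * ch x - sh x * sh x)
                      + 2 * sh x * ch x * (ch x * ch x - sh x * sh x - 1)
                      - 2 * sh x * ch x * (sin x ^ 2 + cos x ^2 - 1)).
        { unfold pp, qq. ring. }
        rewrite chsh in E. pose proof (sin2_cos2 x). unfold Rsqr in H1.
        replace (sin x ^ 2 + cos x ^ 2 - 1) with 0 in E by (simpl; lra).
        replace (1 - 1) with 0 in E by ring.
        destruct (shch_gt x ltac:(lra)).
        assert (0 < pp x ^ 2) by (apply pow_lt; lra).
        apply Ropp_0_gt_lt_contravar. apply Rdiv_neg_pos; auto. rewrite E. lra. }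
    apply (Rmult_lt_compat_r (pp a * pp u)) in Hr; [|nra].
    replace (qq a / pp a * (pp a * pp u)) with (qq a * pp u) in Hr by (field; lra).
    replace (qq u / pp u * (pp a * pp u)) with (pp a * qq u) in Hr by (field; lra).
    lra.
  - subst a. rewrite Hp0.
    assert (Hq : qq ac = 2 * ch ac * sin ac) by (unfold pp, qq in *; lra).
    rewrite Hq. pose proof (ch_pos ac). assert (0 < ch ac * (- sin ac)) by nra. nra.
Qed.

Definition Cf k x := ch (k*x) * cos (k*x).
Definition Sf k x := sh (k*x) * sin (k*x).
Definition Mf k x := sh (k*x) * cos (k*x) - ch (k*x) * sin (k*x).
Definition Nf k x := ch (k*x) * sin (k*x) + sh (k*x) * cos (k*x).

Definition F0 k A B c0 x := c0 + A * Cf k x + B * Sf k x.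
Definition F1 k A B x := k * (A * Mf k x + B * Nf k x).
Definition F2 k A B x := k^2 * (-2 * A * Sf k x + 2 * B * Cf k x).
Definition F3 k A B x := k^3 * (-2 * A * Nf k x + 2 * B * Mf k x).
Definition F4 k A B x := k^4 * (-4 * A * Cf k x - 4 * B * Sf k x).

Lemma dF0 k A B c0 x : is_derive (F0 k A B c0) x (F1 k A B x).
Proof. unfold F0, F1, Cf, Sf, Mf, Nf, ch, sh. auto_derive; auto. field. Qed.
Lemma dF1 k A B x : is_derive (F1 k A B) x (F2 k A B x).
Proof. unfold F2, F1, Cf, Sf, Mf, Nf, ch, sh. auto_derive; auto. field. Qed.
Lemma dF2 k A B x : is_derive (F2 k A B) x (F3 k A B x).
Proof. unfold F2, F3, Cf, Sf, Mf, Nf, ch, sh. auto_derive; auto. field. Qed.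
Lemma dF3 k A B x : is_derive (F3 k A B) x (F4 k A B x).
Proof. unfold F4, F3, Cf, Sf, Mf, Nf, ch, sh. auto_derive; auto. field. Qed.

Lemma ch_neg t : ch (- t) = ch t.
Proof. unfold ch. rewrite Ropp_involutive. field. Qed.
Lemma sh_neg t : sh (- t) = - sh t.
Proof. unfold sh. rewrite Ropp_involutive. field. Qed.

Lemma mvt_nonincr f df a b : a < b ->
  (forall x, a <= x <= b -> is_derive f x (df x)) ->
  (forall x, a < x < b -> df x <= 0) -> f b <= f a.
Proof.
  intros Hab Hd Hp.
  destruct (MVT_cor2 f df a b Hab) as [c [Hc1 Hc2]].
  - intros c Hc. apply is_derive_Reals. apply Hd; auto.
  - specialize (Hp c Hc2). nra.
Qed.

Lemma is_derive_eq (f : R -> R) x l l' : is_derive f x l -> l = l' -> is_derive f x l'.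
Proof. intros H ->; exact H. Qed.

Lemma loc_int x : -1 < x < 1 -> locally x (fun t => -1 < t < 1).
Proof. intro H. exact (open_and _ _ (open_gt (-1)) (open_lt 1) x H). Qed.

Lemma deriv_zero_loc (f : R -> R) x l : locally x (fun t => f t = 0) -> is_derive f x l -> l = 0.
Proof.
  intros Hl Hd.
  assert (H0 : is_derive f x 0).
  { apply (is_derive_ext_loc (fun _ => 0) f x 0).
    - apply (filter_imp (fun t => f t = 0)); [intros t ->; reflexivity|exact Hl].
    - apply (is_derive_const (K:=R_AbsRing) (V:=R_NormedModule) 0 x). }
  apply is_derive_unique in Hd. apply is_derive_unique in H0. congruence.
Qed.

Lemma Cf_m1 k : Cf k (-1) = Cf k 1.
Proof. unfold Cf. replace (k * -1) with (-(k*1)) by ring. rewrite ch_neg, cos_neg. ring. Qed.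
Lemma Sf_m1 k : Sf k (-1) = Sf k 1.
Proof. unfold Sf. replace (k * -1) with (-(k*1)) by ring. rewrite sh_neg, sin_neg. ring. Qed.
Lemma Mf_m1 k : Mf k (-1) = - Mf k 1.
Proof. unfold Mf. replace (k * -1) with (-(k*1)) by ring. rewrite sh_neg, ch_neg, sin_neg, cos_neg. ring. Qed.
Lemma Nf_m1 k : Nf k (-1) = - Nf k 1.
Proof. unfold Nf. replace (k * -1) with (-(k*1)) by ring. rewrite sh_neg, ch_neg, sin_neg, cos_neg. ring. Qed.

Theorem theorem4p3 :
  forall a_c : R, is_ac a_c ->
  forall alpha : R, alpha >= alpha_crit a_c ->
  forall rc : R -> R, is_rc alpha rc ->
  forall x : R, 0 < x < 1 -> Derive rc x > 0.
Proof.
  intros ac Hac alpha Halpha rc [Hder [Hode [Hm1 [Hp1 [Hdm1 Hdp1]]]]] x Hx.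
  pose proof (proj1 Hac) as Hac0.
  assert (Hs2 := Rlt_sqrt2_0).
  assert (Hss : sqrt 2 * sqrt 2 = 2) by (apply sqrt_sqrt; lra).
  unfold alpha_crit in Halpha.
  assert (Hcr : 0 < 1 / (ac * sqrt 2)).
  { apply Rdiv_lt_0_compat; [lra|]. nra. }
  assert (Hal : 0 < alpha) by lra.
  assert (Hal2 : alpha * (ac * sqrt 2) >= 1).
  { assert (H := Rmult_le_compat_r (ac * sqrt 2) (1 / (ac * sqrt 2)) alpha ltac:(nra) ltac:(lra)).
    replace (1 / (ac * sqrt 2) * (ac * sqrt 2)) with 1 in H by (field; nra). lra. }
  set (k := / (alpha * sqrt 2)).
  assert (Hk : 0 < k) by (unfold k; apply Rinv_0_lt_compat; nra).
  assert (Hkac : k <= ac).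
  { unfold k. apply (Rmult_le_reg_r (alpha * sqrt 2)); [nra|]. rewrite Rinv_l by nra. nra. }
  assert (Hk4 : k ^ 4 = / (4 * alpha ^ 4)).
  { unfold k. replace (4 * alpha ^ 4) with ((alpha * sqrt 2) ^ 4).
    - field. nra.
    - replace ((alpha * sqrt 2) ^ 4) with (alpha ^ 4 * (sqrt 2 * sqrt 2) ^ 2) by ring.
      rewrite Hss. ring. }
  set (C1 := Cf k 1). set (S1 := Sf k 1). set (M1 := Mf k 1). set (N1 := Nf k 1).
  set (D := C1 * N1 - S1 * M1).
  assert (HD : 0 < D).
  { assert (E : D = sin k * cos k * (ch k * ch k - sh k * sh k)
                    + sh k * ch k * (sin k ^ 2 + cos k ^ 2)).
    { unfold D, C1, S1, M1, N1, Cf, Sf, Mf, Nf. rewrite Rmult_1_r. ring. }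
    rewrite chsh in E. pose proof (sin2_cos2 k). unfold Rsqr in H.
    replace (sin k ^ 2 + cos k ^ 2) with 1 in E by (simpl; lra).
    destruct (shch_gt k Hk). lra. }
  set (c0 := -2 * alpha ^ 3).
  set (A := - c0 * N1 / D). set (B := c0 * M1 / D).
  assert (HF0p : F0 k A B c0 1 = 0).
  { unfold F0. fold C1 S1. unfold A, B.
    replace (c0 + - c0 * N1 / D * C1 + c0 * M1 / D * S1) with ((c0 * D - c0 * (C1*N1 - S1*M1)) / D) by (field; lra).
    replace (c0 * D - c0 * (C1*N1 - S1*M1)) with 0 by (unfold D; ring). field. lra. }
  assert (HF1p : F1 k A B 1 = 0).
  { unfold F1. fold M1 N1. unfold A, B. field. lra. }
  assert (HF0m : F0 k A B c0 (-1) = 0).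
  { rewrite <- HF0p. unfold F0. rewrite Cf_m1, Sf_m1. reflexivity. }
  assert (HF1m : F1 k A B (-1) = 0).
  { unfold F1. rewrite Mf_m1, Nf_m1. fold M1 N1. unfold A, B. field. lra. }
  assert (HF4 : forall t, F4 k A B t + F0 k A B c0 t / alpha ^ 4 = - 2 / alpha).
  { intro t. unfold F4, F0. rewrite Hk4. unfold c0. field. lra. }
  assert (Hdn : forall n t, (n < 4)%nat -> is_derive (Derive_n rc n) t (Derive_n rc (S n) t)).
  { intros n t Hn. apply Derive_correct. apply (Hder (S n) t). lia. }
  set (w0 := fun t => rc t - F0 k A B c0 t).
  set (w1 := fun t => Derive_n rc 1 t - F1 k A B t).
  set (w2 := fun t => Derive_n rc 2 t - F2 k A B t).
  set (w3 := fun t => Derive_n rc 3 t - F3 k A B t).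
  set (w4 := fun t => Derive_n rc 4 t - F4 k A B t).
  assert (Hw0 : forall t, is_derive w0 t (w1 t)).
  { intro t. exact (is_derive_minus _ _ t _ _ (Hdn 0%nat t ltac:(lia)) (dF0 k A B c0 t)). }
  assert (Hw1 : forall t, is_derive w1 t (w2 t)).
  { intro t. exact (is_derive_minus _ _ t _ _ (Hdn 1%nat t ltac:(lia)) (dF1 k A B t)). }
  assert (Hw2 : forall t, is_derive w2 t (w3 t)).
  { intro t. exact (is_derive_minus _ _ t _ _ (Hdn 2%nat t ltac:(lia)) (dF2 k A B t)). }
  assert (Hw3 : forall t, is_derive w3 t (w4 t)).
  { intro t. exact (is_derive_minus _ _ t _ _ (Hdn 3%nat t ltac:(lia)) (dF3 k A B t)). }
  set (E := fun t => w3 t * w0 t - w2 t * w1 t).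
  assert (HE : forall t, is_derive E t (w4 t * w0 t - w2 t * w2 t)).
  { intro t. eapply is_derive_eq.
    - exact (is_derive_minus _ _ t _ _
        (is_derive_mult _ _ t _ _ (Hw3 t) (Hw0 t) Rmult_comm)
        (is_derive_mult _ _ t _ _ (Hw2 t) (Hw1 t) Rmult_comm)).
    - unfold minus, plus, mult, opp; simpl. ring. }
  assert (Hw4 : forall t, -1 < t < 1 -> w4 t = - w0 t / alpha ^ 4).
  { intros t Ht. unfold w4, w0. pose proof (Hode t Ht). pose proof (HF4 t).
    replace (Derive_n rc 4 t) with (-2/alpha - rc t/alpha^4) by lra.
    replace (F4 k A B t) with (-2/alpha - F0 k A B c0 t/alpha^4) by lra.
    field. lra. }
  assert (HE1 : E 1 = 0).
  { unfold E, w0, w1. change (Derive_n rc 1 1) with (Derive rc 1).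
    rewrite Hp1, Hdp1, HF0p, HF1p. ring. }
  assert (HEm1 : E (-1) = 0).
  { unfold E, w0, w1. change (Derive_n rc 1 (-1)) with (Derive rc (-1)).
    rewrite Hm1, Hdm1, HF0m, HF1m. ring. }
  assert (Hal4 : 0 < alpha ^ 4) by (apply pow_lt; lra).
  assert (HEd : forall t, -1 < t < 1 -> w4 t * w0 t - w2 t * w2 t <= 0).
  { intros t Ht. rewrite (Hw4 t Ht).
    assert (0 <= w0 t * w0 t / alpha ^ 4) by (apply Rdiv_le_0_compat; nra).
    replace (- w0 t / alpha ^ 4 * w0 t) with (- (w0 t * w0 t / alpha ^ 4)) by (field; lra).
    nra. }
  assert (HE0 : forall t, -1 < t < 1 -> E t = 0).
  { intros t Ht.
    assert (E t <= E (-1)).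
    { apply (mvt_nonincr E (fun s => w4 s * w0 s - w2 s * w2 s)); try lra.
      - intros; apply HE.
      - intros s Hs; apply HEd; lra. }
    assert (E 1 <= E t).
    { apply (mvt_nonincr E (fun s => w4 s * w0 s - w2 s * w2 s)); try lra.
      - intros; apply HE.
      - intros s Hs; apply HEd; lra. }
    lra. }
  assert (Hw00 : forall t, -1 < t < 1 -> w0 t = 0).
  { intros t Ht.
    assert (Hl : w4 t * w0 t - w2 t * w2 t = 0).
    { apply (deriv_zero_loc E t).
      - apply (filter_imp (fun s => -1 < s < 1)); [exact HE0|apply loc_int; exact Ht].
      - apply HE. }
    rewrite (Hw4 t Ht) in Hl.
    assert (0 <= w0 t * w0 t / alpha ^ 4) by (apply Rdiv_le_0_compat; nra).
    replace (- w0 t / alpha ^ 4 * w0 t) with (- (w0 t * w0 t / alpha ^ 4)) in Hl by (field; lra).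
    assert (Hz : w0 t * w0 t / alpha ^ 4 = 0) by nra.
    assert (Hz2 : w0 t * w0 t = 0).
    { replace (w0 t * w0 t) with (w0 t * w0 t / alpha ^ 4 * alpha ^ 4) by (field; lra).
      rewrite Hz. ring. }
    nra. }
  assert (Hw1x : w1 x = 0).
  { apply (deriv_zero_loc w0 x).
    - apply (filter_imp (fun s => -1 < s < 1)); [exact Hw00|apply loc_int; lra].
    - apply Hw0. }
  assert (HDx : Derive rc x = F1 k A B x).
  { unfold w1 in Hw1x. change (Derive_n rc 1 x) with (Derive rc x) in Hw1x. lra. }
  rewrite HDx.
  assert (Hf1 : F1 k A B x = k * (- c0 / D) * (pp k * qq (k * x) - qq k * pp (k * x))).
  { unfold F1, A, B, M1, N1, Mf, Nf, pp, qq. rewrite Rmult_1_r. field. lra. }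
  rewrite Hf1.
  assert (Hkey : 0 < pp k * qq (k * x) - qq k * pp (k * x)).
  { apply (key ac k (k * x) Hac); nra. }
  assert (0 < - c0 / D).
  { apply Rdiv_lt_0_compat; auto. unfold c0. assert (0 < alpha ^ 3) by (apply pow_lt; lra). lra. }
  apply Rlt_gt. apply Rmult_lt_0_compat; auto. apply Rmult_lt_0_compat; auto.
Qed.
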